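(* Assume that the success probabilities $Q_a$, $a\in\mathcal{A}$, are pairwise distinct. Then there exists an optimal threshold-type age-dependent policy $\phi^*$ of the MDP $\Lambda$ whose action order $(b_1,\dots,b_K)$ satisfies, for every $1\le k<K$, $$b_{k+1}\in\arg\min_{a\in\mathcal{A}:\,Q_a>Q_{b_k}}\ \gamma_{b_k,a},\qquad \gamma_{b_k,a}=\frac{E_a-E_{b_k}}{Q_a-Q_{b_k}}.$$
   Context: Fix $N\in\mathbb{N}^+$ vehicle types $\mathcal{N}=\{1,\dots,N\}$ with arrival probabilities $p_n\in(0,1]$, mean operational costs $c_n\ge0$ and mean sensing capabilities $r_n\in(0,1]$. Fix $\beta\in(0,1)$, $\epsilon>0$. Actions: $\mathcal{A}=2^{\mathcal{N}}$. Success probability $Q_\emptyset=0$, $Q_a=1-\prod_{n\in a}(1-r_np_n)$; expected recruitment cost $E_a=\sum_{n\in a}p_nc_n$. The marginal cost-effectiveness of changing from action $a_i$ to $a_j$ (with $Q_{a_j}\ne Q_{a_i}$) is $\gamma_{a_i,a_j}=(E_{a_j}-E_{a_i})/(Q_{a_j}-Q_{a_i})$. Immediate cost at state $\delta\in\mathbb{N}^+$: $u(\delta,a)=(1-\beta)E_a-\beta\epsilon\big(Q_a(\delta^2+2\delta)-(1+\delta)^2\big)$. MDP $\Lambda$: states $\mathbb{N}^+$; from state $s$ under action $a$ move to $1$ w.p. $Q_a$ and to $s+1$ w.p. $1-Q_a$; average cost $V(\phi)=\limsup_{T\to\infty}\frac1T\mathbb{E}^\phi[\sum_{t=1}^Tu(S(t),A(t))]$,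 $S(1)=1$, to be minimized. A threshold-type age-dependent policy is a deterministic stationary policy $\phi:\mathbb{N}^+\to\mathcal{A}$ for which there are $K\in\mathbb{N}^+$, an action order $(b_1,\dots,b_K)$ with $b_k\ne b_{k+1}$, and integer thresholds $1\le\theta_{b_1\to b_2}\le\dots\le\theta_{b_{K-1}\to b_K}$ such that $\phi(s)=b_k$ for $\theta_{b_{k-1}\to b_k}\le s<\theta_{b_k\to b_{k+1}}$ (conventions $\theta_{b_0\to b_1}=1$, $\theta_{b_K\to b_{K+1}}=\infty$). *)

(* Defs.v *)
From HB Require Import structures.
From mathcomp Require Import all_boot all_order all_algebra.
From mathcomp Require Import all_classical all_reals.
From mathcomp Require Import ereal topology normedtype sequences.
Set Implicit Arguments. Unset Strict Implicit. Unset Printing Implicit Defensive.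
Import Order.TTheory GRing.Theory Num.Theory.
Local Open Scope ring_scope.

Section Model.
Variables (R : realType) (N : nat).
(* vehicle types are 'I_N (type n+1 in the paper is index n);
   actions are subsets of the vehicle types *)
Notation act := {set 'I_N}.
Variables (p c r : 'I_N -> R) (beta eps : R).

Definition Qa (a : act) : R := 1 - \prod_(n in a) (1 - r n * p n).
Definition Ea (a : act) : R := \sum_(n in a) p n * c n.
Definition gamma (ai aj : act) : R := (Ea aj - Ea ai) / (Qa aj - Qa ai).

Definition ucost (d : nat) (a : act) : R :=
  (1 - beta) * Ea a
  - beta * eps * (Qa a * (d%:R ^+ 2 + 2 * d%:R) - (1 + d%:R) ^+ 2).

(* General (history-dependent, randomized) policies: given the history
   (past states and actions, in order) and the current state, a probability
   distribution over actions. *)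
Definition history := seq (nat * act).
Definition policy := history -> nat -> act -> R.
Definition is_policy (pi : policy) : Prop :=
  forall h s, (forall a, 0 <= pi h s a) /\ \sum_(a : act) pi h s a = 1.

(* expected total cost over the next T steps from history h, current state s:
   from s under a go to 1 w.p. Q_a and to s+1 w.p. 1 - Q_a *)
Fixpoint Jcost (pi : policy) (T : nat) (h : history) (s : nat) : R :=
  match T with
  | 0 => 0
  | T'.+1 => \sum_(a : act) pi h s a *
      (ucost s a + Qa a * Jcost pi T' (rcons h (s, a)) 1
                 + (1 - Qa a) * Jcost pi T' (rcons h (s, a)) s.+1)
  end.

Definition Vavg (pi : policy) : \bar R :=
  limn_esup (fun T : nat => ((Jcost pi T.+1 [::] 1) / T.+1%:R)%:E).

Definition det_policy (phi : nat -> act) : policy :=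
  fun _ s a => (a == phi s)%:R.

(* phi is a threshold-type age-dependent policy with K actions, action order
   b 1, ..., b K and thresholds th 1 <= ... <= th (K-1) (convention th 0 = 1,
   th K = infinity). *)
Definition threshold_with (phi : nat -> act) (K : nat) (b : nat -> act)
    (th : nat -> nat) : Prop :=
  [/\ (1 <= K)%N,
      th 0 = 1%N,
      (forall k, (1 <= k < K)%N -> b k != b k.+1),
      (forall k, (k.+1 < K)%N -> (th k <= th k.+1)%N) &
      (forall k s, (1 <= k <= K)%N -> (1 <= s)%N ->
         (th k.-1 <= s)%N -> (k = K \/ (s < th k)%N) -> phi s = b k)].

Definition optimal (phi : nat -> act) : Prop :=
  forall pi : policy, is_policy pi -> (Vavg (det_policy phi) <= Vavg pi)%E.

End Model.

(* Main.v *)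
Require Import Defs.
From HB Require Import structures.
From mathcomp Require Import all_boot all_order all_algebra.
From mathcomp Require Import all_classical all_reals.
From mathcomp Require Import ereal topology normedtype sequences.
From mathcomp Require Import ring lra.
Import Order.TTheory GRing.Theory Num.Theory numFieldNormedType.Exports.
Local Open Scope ring_scope.

Section Limsup.
Variable R : realType.

Lemma limsup_le_real (v : nat -> R) x :
  (forall e, 0 < e -> exists n0, forall n, (n0 <= n)%N -> v n <= x + e) ->
  (limn_esup (fun n => (v n)%:E) <= x%:E)%E.
Proof.
move=> H; apply/lee_addgt0Pr => e e0; rewrite limn_esup_lim.
apply: lime_le; first exact: is_cvg_esups.
have [n0 Hn0] := H e e0.
exists n0 => // n /= n0n; apply: ge_ereal_sup => y [k /= kn <-].
by rewrite lee_fin; apply: Hn0; apply: leq_trans kn.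
Qed.

Lemma limsup_ge_real (v : nat -> R) x :
  (forall e, 0 < e -> forall n0, exists2 n, (n0 <= n)%N & x - e <= v n) ->
  (x%:E <= limn_esup (fun n => (v n)%:E))%E.
Proof.
move=> H; rewrite limn_esup_lim; apply: lime_ge; first exact: is_cvg_esups.
apply: nearW => n; apply/lee_subgt0Pr => e e0.
have [k kn hk] := H e e0 n.
apply: le_ereal_sup_tmp; exists (v k)%:E; first by exists k.
by rewrite -EFinB lee_fin.
Qed.

Lemma growth (Jn Ln : nat -> R) g K c : 0 < K ->
  (forall n, Jn n.+1 = Jn n + Ln n) ->
  (forall n, n.+1%:R * g + c <= Jn n.+1 + K * Ln n) ->
  forall e, 0 < e -> forall n0, exists2 n, (n0 <= n)%N & g - e <= Jn n.+1 / n.+1%:R.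
Proof.
move=> K0 Js Hl e e0 n0.
case: (pselect (exists2 n, (n0 <= n)%N & g - e <= Jn n.+1 / n.+1%:R)) => // Hn.
exfalso.
have Hlt : forall n, (n0 <= n)%N -> Jn n.+1 < (g - e) * n.+1%:R.
  move=> n nn; rewrite -ltr_pdivrMr ?ltr0Sn //; rewrite ltNge; apply/negP => hh.
  by apply: Hn; exists n.
have HL : forall n, (n0 <= n)%N -> n.+1%:R * e + c <= K * Ln n.
  move=> n nn; have := Hl n; have := Hlt n nn; nra.
set X := `|K * (g - e + 1) - c| / e.
have X0 : 0 <= X by rewrite divr_ge0 // ltW.
set n1 := (n0 + Num.bound X)%N.
have n0n1 : (n0 <= n1)%N by rewrite leq_addr.
have Xb : X < (Num.bound X)%:R := archi_boundP X0.
have Xn1 : X < n1.+1%:R.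
  apply: (lt_le_trans Xb); rewrite ler_nat; apply: leq_trans (leqnSn _); exact: leq_addl.
set sig := g - e + 1.
have Lsig : forall j, (n1 <= j)%N -> sig <= Ln j.
  move=> j jn; have := HL j (leq_trans n0n1 jn).
  have : n1.+1%:R <= j.+1%:R :> R by rewrite ler_nat.
  have : K * sig - c <= X * e.
    by rewrite /X divfK ?gt_eqF //; exact: ler_norm.
  move=> h1 h2 h3.
  have : X * e <= n1.+1%:R * e by apply: ler_wpM2r; [exact: ltW | exact: ltW].
  have : n1.+1%:R * e <= j.+1%:R * e by apply: ler_wpM2r => //; exact: ltW.
  move=> h4 h5.
  have : K * sig <= K * Ln j by lra.
  by rewrite ler_pM2l.
have Jgrow : forall m, Jn (n1.+1 + m)%N >= Jn n1.+1 + m%:R * sig.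
  elim=> [|m IH]; first by rewrite addn0 mul0r addr0.
  rewrite addnS (Js (n1.+1 + m)%N) -natr1 mulrDl mul1r; have := Lsig (n1.+1 + m)%N (leq_trans (leqnSn _) (leq_addr _ _)); lra.
set Y := `|(g - e) * n1.+1%:R - Jn n1.+1|.
have Y0 : 0 <= Y by exact: normr_ge0.
set m := Num.bound Y.
have Yb : Y < m%:R := archi_boundP Y0.
have := Hlt (n1 + m)%N (leq_trans n0n1 (leq_addr _ _)).
have := Jgrow m; rewrite -addSn natrD.
have := ler_norm ((g - e) * n1.+1%:R - Jn n1.+1); rewrite -/Y.
move=> h1 h2 h3; rewrite /sig in h2; nra.
Qed.

End Limsup.
Section Verif.
Variables (R : realType) (N : nat) (p c r : 'I_N -> R) (beta eps : R).
Local Notation act := {set 'I_N}.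
Local Notation Q := (Qa p r).
Local Notation u := (ucost p c r beta eps).
Local Notation J := (Jcost p c r beta eps).

Variable Q01 : forall a, 0 <= Q a <= 1.
Variables (g : R) (h : nat -> R).

Fixpoint Hexp (pi : policy R N) (T : nat) (hi : history N) (s : nat) : R :=
  match T with
  | 0 => h s
  | T'.+1 => \sum_(a : act) pi hi s a *
      (Q a * Hexp pi T' (rcons hi (s, a)) 1
                 + (1 - Q a) * Hexp pi T' (rcons hi (s, a)) s.+1)
  end.

Fixpoint Lc (pi : policy R N) (T : nat) (hi : history N) (s : nat) : R :=
  match T with
  | 0 => \sum_(a : act) pi hi s a * u s a
  | T'.+1 => \sum_(a : act) pi hi s a *
      (Q a * Lc pi T' (rcons hi (s, a)) 1
                 + (1 - Q a) * Lc pi T' (rcons hi (s, a)) s.+1)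
  end.

Lemma sum_pol (pi : policy R N) hi s (X : R) : is_policy pi ->
  \sum_(a : act) pi hi s a * X = X.
Proof. by move=> /(_ hi s) [_ H1]; rewrite -big_distrl /= H1 mul1r. Qed.

Lemma lowerJ (pi : policy R N) : is_policy pi ->
  (forall s a, g + h s <= u s a + Q a * h 1 + (1 - Q a) * h s.+1) ->
  forall T hi s, T%:R * g + h s <= J pi T hi s + Hexp pi T hi s.
Proof.
move=> Hpi bell; elim=> [|T IH] hi s /=; first by rewrite mul0r !add0r lexx.
rewrite -big_split /= -[X in X <= _](sum_pol pi hi s _ Hpi).
apply: ler_sum => a _; rewrite -mulrDr; apply: ler_wpM2l; first by case: (Hpi hi s) => ->.
have := IH (rcons hi (s, a)) 1; have := IH (rcons hi (s, a)) s.+1.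
have := bell s a; have := Q01 a; rewrite -natr1.
set x1 := J _ _ _ 1; set x2 := J _ _ _ s.+1; set y1 := Hexp _ _ _ 1; set y2 := Hexp _ _ _ s.+1.
move=> /andP[q0 q1] b i2 i1.
have e1 := ler_wpM2l q0 i1. have e2 : 0 <= 1 - Q a by lra.
have e3 := ler_wpM2l e2 i2. nra.
Qed.

Lemma detsum (phi : nat -> act) hi s (F : act -> R) :
  \sum_(a : act) det_policy R phi hi s a * F a = F (phi s).
Proof.
rewrite (bigD1 (phi s)) //= /det_policy eqxx mul1r big1 ?addr0 //.
by move=> a /negbTE ->; rewrite mul0r.
Qed.

Lemma det_is_policy (phi : nat -> act) : is_policy (det_policy R phi).
Proof.
move=> hi s; split; first by move=> a; rewrite /det_policy ler0n.
transitivity (\sum_(a : act) det_policy R phi hi s a * 1).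
  by apply: eq_bigr => a _; rewrite mulr1.
by rewrite detsum.
Qed.

Lemma eqJ (phi : nat -> act) :
  (forall s, (1 <= s)%N -> g + h s = u s (phi s) + Q (phi s) * h 1 + (1 - Q (phi s)) * h s.+1) ->
  forall T hi s, (1 <= s)%N -> J (det_policy R phi) T hi s + Hexp (det_policy R phi) T hi s = T%:R * g + h s.
Proof.
move=> bell; elim=> [|T IH] hi s s1 /=; first by rewrite /= mul0r !add0r.
rewrite !detsum.
have /= := IH (rcons hi (s, phi s)) 1 (leqnn _); have /= := IH (rcons hi (s, phi s)) s.+1 (ltnW s1).
set x1 := J _ _ _ 1; set x2 := J _ _ _ s.+1; set y1 := Hexp _ _ _ 1; set y2 := Hexp _ _ _ s.+1.
move=> i2 i1; have b := bell s s1; rewrite -natr1.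
have -> : u s (phi s) + Q (phi s) * x1 + (1 - Q (phi s)) * x2 +
  (Q (phi s) * y1 + (1 - Q (phi s)) * y2) = u s (phi s) + Q (phi s) * (x1 + y1) + (1 - Q (phi s)) * (x2 + y2) by ring.
rewrite i1 i2; lra.
Qed.

Lemma Hexp_lb (pi : policy R N) hmin : is_policy pi -> (forall s, hmin <= h s) ->
  forall T hi s, hmin <= Hexp pi T hi s.
Proof.
move=> Hpi hb; elim=> [|T IH] hi s //=.
rewrite -[X in X <= _](sum_pol pi hi s _ Hpi); apply: ler_sum => a _.
apply: ler_wpM2l; first by case: (Hpi hi s) => ->.
have := IH (rcons hi (s, a)) 1; have := IH (rcons hi (s, a)) s.+1; have := Q01 a.
move=> /andP[q0 q1] i2 i1; nra.
Qed.

Lemma Junf (pi : policy R N) T hi s : J pi T.+1 hi s = \sum_(a : act) pi hi s a *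
   (u s a + Q a * J pi T (rcons hi (s,a)) 1 + (1 - Q a) * J pi T (rcons hi (s,a)) s.+1).
Proof. by []. Qed.
Lemma Lunf (pi : policy R N) T hi s : Lc pi T.+1 hi s = \sum_(a : act) pi hi s a *
   (Q a * Lc pi T (rcons hi (s,a)) 1 + (1 - Q a) * Lc pi T (rcons hi (s,a)) s.+1).
Proof. by []. Qed.

Lemma Jsucc (pi : policy R N) : forall T hi s, J pi T.+1 hi s = J pi T hi s + Lc pi T hi s.
Proof.
elim=> [|T IH] hi s.
  by rewrite Junf /= add0r; apply: eq_bigr => a _; rewrite !mulr0 !addr0.
rewrite Junf [J pi T.+1 hi s]Junf Lunf -big_split; apply: eq_bigr => a _.
rewrite !IH /=; ring.
Qed.

Lemma Hunf (pi : policy R N) T hi s : Hexp pi T.+1 hi s = \sum_(a : act) pi hi s a *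
   (Q a * Hexp pi T (rcons hi (s,a)) 1 + (1 - Q a) * Hexp pi T (rcons hi (s,a)) s.+1).
Proof. by []. Qed.

Lemma Hexp_ub (pi : policy R N) K C0 : is_policy pi ->
  (forall s a, Q a * h 1 + (1 - Q a) * h s.+1 <= K * u s a + C0) ->
  forall T hi s, Hexp pi T.+1 hi s <= K * Lc pi T hi s + C0.
Proof.
move=> Hpi hb; elim=> [|T IH] hi s.
  rewrite [Hexp _ _ _ _]/= [Lc _ _ _ _]/= mulr_sumr -[C0](sum_pol pi hi s _ Hpi) -big_split /=.
  apply: ler_sum => a _; rewrite mulrCA -mulrDr; apply: ler_wpM2l; first by case: (Hpi hi s) => ->.
  exact: hb.
rewrite [Hexp _ _ _ _]Hunf [Lc _ _ _ _]Lunf mulr_sumr -[C0](sum_pol pi hi s _ Hpi) -big_split.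
apply: ler_sum => a _; rewrite [X in _ <= X]/=; rewrite mulrCA -mulrDr; apply: ler_wpM2l; first by case: (Hpi hi s) => ->.
have := IH (rcons hi (s, a)) 1; have := IH (rcons hi (s, a)) s.+1; have := Q01 a.
move=> /andP[q0 q1] i2 i1; have e2 : 0 <= 1 - Q a by lra.
have f1 := ler_wpM2l q0 i1; have f2 := ler_wpM2l e2 i2; nra.
Qed.

Lemma Vavg_upper (phi : nat -> act) hmin :
  (forall s, (1 <= s)%N -> g + h s = u s (phi s) + Q (phi s) * h 1 + (1 - Q (phi s)) * h s.+1) ->
  (forall s, hmin <= h s) ->
  (Vavg p c r beta eps (det_policy R phi) <= g%:E)%E.
Proof.
move=> bell hb; rewrite /Vavg; apply: limsup_le_real => e e0.
set c0 := h 1 - hmin.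
have c00 : 0 <= c0 by rewrite /c0 subr_ge0.
have X0 : 0 <= c0 / e by rewrite divr_ge0 // ltW.
exists (Num.bound (c0 / e)) => n nb.
have Heq := eqJ phi bell n.+1 [::] 1 (leqnn 1).
have Hl := Hexp_lb (det_policy R phi) hmin (det_is_policy phi) hb n.+1 [::] 1.
rewrite ler_pdivrMr ?ltr0Sn //.
have : c0 / e < n.+1%:R.
  apply: (lt_le_trans (archi_boundP X0)); rewrite ler_nat; exact: leq_trans nb (leqnSn _).
rewrite ltr_pdivrMr // => hc.
rewrite /c0 in hc; nra.
Qed.

Lemma Vavg_lower (pi : policy R N) K C0 : is_policy pi -> 0 < K ->
  (forall s a, g + h s <= u s a + Q a * h 1 + (1 - Q a) * h s.+1) ->
  (forall s a, Q a * h 1 + (1 - Q a) * h s.+1 <= K * u s a + C0) ->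
  (g%:E <= Vavg p c r beta eps pi)%E.
Proof.
move=> Hpi K0 bell hb; rewrite /Vavg; apply: limsup_ge_real => e e0 n0.
apply: (@growth _ (fun n => J pi n [::] 1) (fun n => Lc pi n [::] 1) g K (h 1 - C0) K0) => //.
  by move=> n; rewrite Jsucc.
move=> n; have := lowerJ pi Hpi bell n.+1 [::] 1; have := Hexp_ub pi K C0 Hpi hb n [::] 1; lra.
Qed.

End Verif.

Section Constr.
Variables (R : realType) (N : nat) (p c r : 'I_N -> R) (beta eps : R).
Variable hN : (0 < N)%N.
Variable hp : forall n, 0 < p n <= 1.
Variable hc : forall n, 0 <= c n.
Variable hr : forall n, 0 < r n <= 1.
Variable hbeta : 0 < beta < 1.
Variable heps : 0 < eps.
Variable hinj : injective (Qa p r).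
Local Notation act := {set 'I_N}.
Local Notation Q := (Qa p r).
Local Notation E := (Ea p c).
Local Notation u := (ucost p c r beta eps).

Lemma Q01 a : 0 <= Q a <= 1.
Proof.
have hf : forall n, 0 <= 1 - r n * p n <= 1.
  move=> n; have := hp n; have := hr n => /andP[r0 r1] /andP[p0 p1].
  have : r n * p n <= 1 by rewrite -(mulr1 1); apply: ler_pM => //; exact: ltW.
  have : 0 <= r n * p n by rewrite mulr_ge0 // ltW.
  lra.
rewrite /Qa; apply/andP; split.
  by rewrite subr_ge0; apply: prodr_ile1 => n _; exact: hf.
rewrite lerBlDr lerDl; apply: prodr_ge0 => n _; by case/andP: (hf n).
Qed.

Lemma E0 a : 0 <= E a.
Proof.
rewrite /Ea; apply: sumr_ge0 => n _; apply: mulr_ge0 => //; by case/andP: (hp n) => /ltW.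
Qed.

Lemma Qset1 i : Q [set i] = r i * p i.
Proof. by rewrite /Qa big_set1; ring. Qed.

Definition al := 1 - beta.
Definition D := beta * eps.
Lemma al0 : 0 < al. Proof. rewrite /al; case/andP: hbeta => _ ?; lra. Qed.
Lemma D0 : 0 < D. Proof. rewrite /D; case/andP: hbeta => ? _; exact: mulr_gt0. Qed.

Definition v a t := al * E a + (1 - Q a) * t.

Lemma v_mono a t1 t2 : t1 <= t2 -> v a t1 <= v a t2.
Proof.
move=> h; rewrite /v lerD2l; apply: ler_wpM2l => //; have := Q01 a; lra.
Qed.

Definition F : act := Order.arg_max [set: 'I_N]%SET xpredT (fun a => Q a).
Lemma FmaxQ a : Q a <= Q F.
Proof. by rewrite /F; case: arg_maxP => //= i _ H; exact: H. Qed.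

Lemma QFpos : 0 < Q F.
Proof.
apply: (lt_le_trans _ (FmaxQ [set Ordinal hN])); rewrite Qset1.
by apply: mulr_gt0; [case/andP: (hr (Ordinal hN)) | case/andP: (hp (Ordinal hN))].
Qed.

Definition amin t : act := Order.arg_min [set: 'I_N]%SET xpredT (fun a => v a t).
Definition m t := v (amin t) t.
Lemma m_le a t : m t <= v a t.
Proof. by rewrite /m /amin; case: arg_minP => //= i _ H; exact: H. Qed.

Lemma m_mono t1 t2 : t1 <= t2 -> m t1 <= m t2.
Proof. move=> h; apply: (le_trans (m_le (amin t2) t1)); exact: v_mono. Qed.

Lemma m_lip1 t1 t2 : m t1 - m t2 <= `|t1 - t2|.
Proof.
have := m_le (amin t2) t1; rewrite /m /v.
have := Q01 (amin t2) => /andP[q0 q1].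
have := ler_norm (t1 - t2); have := ler_norm (t2 - t1); rewrite distrC.
move=> n1 n2 h.
have : (1 - Q (amin t2)) * (t1 - t2) <= `|t1 - t2|.
  apply: le_trans (ler_norm _) _.
  rewrite normrM ger0_norm ?subr_ge0 //; rewrite -[X in _ <= X]mul1r.
  by apply: ler_wpM2r => //; lra.
lra.
Qed.

Lemma m_lip t1 t2 : `|m t1 - m t2| <= `|t1 - t2|.
Proof.
rewrite ler_norml m_lip1 andbT; have := m_lip1 t2 t1; rewrite distrC; lra.
Qed.

Lemma m_ge0 t : 0 <= t -> 0 <= m t.
Proof.
move=> t0; rewrite /m /v; apply: addr_ge0.
  by apply: mulr_ge0; [exact: ltW al0 | exact: E0].
by apply: mulr_ge0 => //; have := Q01 (amin t); lra.
Qed.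

Definition qF := 1 - Q F.
Definition A := D / Q F.
Definition B := 2 * qF * A / Q F.
Definition Cg g := (al * E F - g + qF * (A + B)) / Q F.
Definition P g (s : nat) := A * s%:R ^+ 2 + B * s%:R + Cg g.

Lemma QF1 : Q F <= 1. Proof. by case/andP: (Q01 F). Qed.
Lemma qF0 : 0 <= qF. Proof. rewrite /qF; have := QF1; lra. Qed.
Lemma A0 : 0 < A. Proof. by rewrite /A divr_gt0 // ?D0 ?QFpos. Qed.
Lemma B0 : 0 <= B.
Proof. rewrite /B; apply: divr_ge0; last exact: ltW QFpos.
apply: mulr_ge0; last exact: ltW A0. apply: mulr_ge0 => //; exact: qF0. Qed.
Lemma AD : D <= A.
Proof.
rewrite /A ler_pdivlMr ?QFpos //; rewrite -[X in _ <= X]mulr1.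
apply: ler_wpM2l; [exact: ltW D0 | exact: QF1].
Qed.

Lemma P_rec g s : P g s = D * s%:R ^+ 2 - g + v F (P g s.+1).
Proof.
have QF0 : Q F != 0 by rewrite gt_eqF // QFpos.
rewrite /P /v /Cg /B /A /qF -natr1; field; exact: QF0.
Qed.

Lemma P_mono g s : P g s <= P g s.+1.
Proof.
rewrite /P -natr1; have := A0; have := B0; have : 0 <= s%:R :> R by [].
move=> h1 h2 h3; nra.
Qed.

Lemma P_lin g s : A * s%:R + Cg g <= P g s.
Proof.
rewrite /P; have := A0; have := B0; have : 0 <= s%:R :> R by [].
move=> h1 h2 h3.
have : s%:R <= s%:R ^+ 2 :> R.
  case: s h1 => [|s] h1; first by rewrite expr2 mulr0.
  by rewrite expr2 ler_pMl // ?ltr0Sn // ler1n.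
nra.
Qed.

Definition T0 := \sum_(a | a != F) `| al * (E F - E a) / (Q F - Q a) |.

Lemma T0_ge0 : 0 <= T0.
Proof. by apply: sumr_ge0 => a _; exact: normr_ge0. Qed.

Lemma F_opt t : T0 <= t -> forall a, v F t <= v a t.
Proof.
move=> Ht a; case: (eqVneq a F) => [->|aF]; first exact: lexx.
have QaF : Q a < Q F.
  rewrite lt_neqAle FmaxQ andbT; apply/negP => /eqP /hinj H.
  by rewrite H eqxx in aF.
have : al * (E F - E a) / (Q F - Q a) <= t.
  apply: le_trans (ler_norm _) _; apply: le_trans Ht.
  rewrite /T0 (bigD1 a) //= lerDl; apply: sumr_ge0 => b _; exact: normr_ge0.
rewrite ler_pdivrMr ?subr_gt0 // /v => h; nra.
Qed.

Definition ghi := al * E F + A + B.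
Lemma ghi0 : 0 <= ghi.
Proof.
rewrite /ghi; have := A0; have := B0; have : 0 <= al * E F by rewrite mulr_ge0 ?E0 // ltW ?al0.
lra.
Qed.

Definition Xb := (T0 + ghi / Q F) / A.
Lemma Mex : {M0 : nat | (1 <= M0)%N /\ forall s, (M0 <= s)%N -> Xb < s%:R}.
Proof.
have X0 : 0 <= Xb.
  rewrite /Xb; apply: divr_ge0; last exact: ltW A0.
  apply: addr_ge0; first exact: T0_ge0.
  apply: divr_ge0; [exact: ghi0 | exact: ltW QFpos].
exists (Num.bound Xb).+1; split => // s Ms.
apply: (lt_le_trans (archi_boundP X0)); rewrite ler_nat; apply: leq_trans Ms; exact: leqnSn.
Qed.
Definition M := proj1_sig Mex.
Lemma M1 : (1 <= M)%N. Proof. exact: (proj1 (proj2_sig Mex)). Qed.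

Lemma Mbig g s : g <= ghi -> (M <= s)%N -> T0 <= P g s.
Proof.
move=> gh Ms.
have : Xb < s%:R by exact: (proj2 (proj2_sig Mex) s Ms).
rewrite /Xb ltr_pdivrMr ?A0 // => h1.
apply: le_trans (P_lin g s).
have : - (ghi / Q F) <= Cg g.
  rewrite /Cg -mulNr; apply: ler_wpM2r; first by rewrite invr_ge0 ltW ?QFpos.
  have : 0 <= al * E F by rewrite mulr_ge0 ?E0 // ltW ?al0.
  have : 0 <= qF * (A + B) by rewrite mulr_ge0 ?qF0 // addr_ge0 ?B0 // ltW ?A0.
  lra.
have := A0; lra.
Qed.

Fixpoint yb g k := match k with
  | 0 => P g M
  | k'.+1 => D * (M - k'.+1)%:R ^+ 2 - g + m (yb g k') end.

Definition y g s := if (M <= s)%N then P g s else yb g (M - s).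

Lemma y_ge g s : (M <= s)%N -> y g s = P g s.
Proof. by rewrite /y => ->. Qed.

Lemma yb_0 g : yb g 0 = P g M. Proof. by []. Qed.

Lemma yb_S g k : yb g k.+1 = D * (M - k.+1)%:R ^+ 2 - g + m (yb g k).
Proof. by []. Qed.

Lemma y_rec_lt g s : (s < M)%N -> y g s = D * s%:R ^+ 2 - g + m (y g s.+1).
Proof.
move=> sM; have h : (M <= s)%N = false by rewrite leqNgt sM.
rewrite /y h -(subnSK sM) yb_S subnSK // subKn; last exact: ltnW.
case: (leqP M s.+1) => h2; last by [].
have eM : M = s.+1 by apply/eqP; rewrite eqn_leq h2 sM.
by rewrite -eM subnn yb_0.
Qed.

Lemma QF0' : Q F != 0. Proof. by rewrite gt_eqF // QFpos. Qed.


Lemma yb_lip g g' k : `|yb g k - yb g' k| <= (k%:R + (Q F)^-1) * `|g - g'|.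
Proof.
elim: k => [|k IH].
  rewrite !yb_0 add0r.
  have -> : P g M - P g' M = (g' - g) / Q F by rewrite /P /Cg; field; exact: QF0'.
  rewrite normrM normfV (gtr0_norm QFpos) distrC mulrC lexx //.
rewrite !yb_S.
have -> : D * (M - k.+1)%:R ^+ 2 - g + m (yb g k) - (D * (M - k.+1)%:R ^+ 2 - g' + m (yb g' k))
   = (g' - g) + (m (yb g k) - m (yb g' k)) by ring.
apply: le_trans (ler_normD _ _) _.
have := m_lip (yb g k) (yb g' k).
move: IH; rewrite (distrC g' g) -natr1 !mulrDl mul1r; lra.
Qed.

Definition G g := yb g (M - 1).


Lemma y1 g : y g 1 = G g.
Proof.
rewrite /y /G; case: (leqP M 1) => h.
  have eM : M = 1%N by apply/eqP; rewrite eqn_leq h M1.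
  by rewrite eM subnn yb_0 eM.
by [].
Qed.

Lemma G_cont : continuous G.
Proof.
move=> x; apply/cvgrPdist_lt => e e0.
set L := (M - 1)%:R + (Q F)^-1.
have L0 : 0 < L by rewrite /L ltr_wpDl // invr_gt0 QFpos.
apply/nbhs_ballP; exists (e / L); first by apply: divr_gt0.
move=> t; rewrite /ball /= => xt.
apply: le_lt_trans (yb_lip x t (M - 1)) _.
by rewrite -/L mulrC -ltr_pdivlMr.
Qed.

Lemma yb0_ge0 k : 0 <= yb 0 k.
Proof.
elim: k => [|k IH].
  rewrite yb_0 /P; apply: addr_ge0; first apply: addr_ge0.
  - by apply: mulr_ge0; [exact: ltW A0|exact: sqr_ge0].
  - by apply: mulr_ge0; [exact: B0|].
  rewrite /Cg subr0; apply: divr_ge0; last exact: ltW QFpos.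
  apply: addr_ge0; first by rewrite mulr_ge0 ?E0 // ltW ?al0.
  apply: mulr_ge0; first exact: qF0.
  by apply: addr_ge0; [exact: ltW A0|exact: B0].
rewrite yb_S subr0; apply: addr_ge0; last exact: m_ge0.
by apply: mulr_ge0; [exact: ltW D0|exact: sqr_ge0].
Qed.

Lemma yb_le_P g k : (k <= M)%N -> yb g k <= P g (M - k).
Proof.
elim: k => [|k IH] kM; first by rewrite subn0 yb_0.
rewrite yb_S (P_rec _ (M - k.+1)) subnSK //.
rewrite lerD2l; apply: le_trans (m_le F _) _.
by apply: v_mono; apply: IH; exact: ltnW.
Qed.

Lemma P_ghi1 : P ghi 1 = 0.
Proof. rewrite /P /Cg /ghi /qF; field; exact: QF0'. Qed.

Lemma ghi_ge0 : 0 <= ghi.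
Proof. exact: ghi0. Qed.

Lemma exists_root : exists2 g, 0 <= g <= ghi & G g = 0.
Proof.
have h0 : 0 <= G 0 by exact: yb0_ge0.
have h1 : G ghi <= 0.
  apply: le_trans (yb_le_P ghi (M - 1) (leq_subr _ _)) _.
  by rewrite subKn ?M1 // P_ghi1.
have Gc : {within `[0, ghi], continuous G}%classic.
  by apply: continuous_subspaceT; exact: G_cont.
have cond : Num.min (G 0) (G ghi) <= 0 <= Num.max (G 0) (G ghi).
  apply/andP; split.
    by rewrite ge_min h1 orbT.
  by rewrite le_max h0.
have [g gi Gg] := @IVT R G 0 ghi 0 ghi_ge0 Gc cond.
by exists g => //; move: gi; rewrite in_itv.
Qed.


Lemma y_rec g : g <= ghi -> forall s, y g s = D * s%:R ^+ 2 - g + m (y g s.+1).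
Proof.
move=> gh s; case: (ltnP s M) => sM; first exact: y_rec_lt.
have sM1 : (M <= s.+1)%N by apply: leq_trans sM (leqnSn _).
rewrite (y_ge _ _ sM) (y_ge _ _ sM1) {1}P_rec; congr (_ + _).
apply/eqP; rewrite eq_le; apply/andP; split; last exact: m_le.
rewrite /m; exact: (F_opt _ (Mbig _ _ gh sM1) (amin (P g s.+1))).
Qed.

Lemma y_mono g : g <= ghi -> forall s, y g s <= y g s.+1.
Proof.
move=> gh.
have key : forall k s, (M <= s + k)%N -> y g s <= y g s.+1.
  elim=> [|k IH] s Hs.
    rewrite addn0 in Hs.
    by rewrite (y_ge _ _ Hs) (y_ge _ _ (leq_trans Hs (leqnSn _))) P_mono.
  rewrite (y_rec _ gh s) [in X in _ <= X](y_rec _ gh s.+1).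
  have h1 : m (y g s.+1) <= m (y g s.+2) by apply: m_mono; apply: IH; rewrite addSnnS.
  have h2 : D * s%:R ^+ 2 <= D * s.+1%:R ^+ 2.
    apply: ler_wpM2l; first exact: ltW D0.
    by rewrite ler_sqr ?ler_nat // ?nnegrE.
  lra.
by move=> s; apply: (key M s); rewrite leq_addl.
Qed.

Lemma y_unb g : g <= ghi -> forall t, exists s, (1 <= s)%N /\ t <= y g s.+1.
Proof.
move=> gh t.
have X0 : 0 <= `|t - Cg g| / A by rewrite divr_ge0 // ltW ?A0.
exists (M + Num.bound (`|t - Cg g| / A)%R)%N; split.
  by apply: leq_trans M1 (leq_addr _ _).
set s := (M + _)%N.
have sM : (M <= s.+1)%N by apply: leq_trans (leq_addr _ _) (leqnSn _).
rewrite (y_ge _ _ sM); apply: le_trans (P_lin _ _).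
have : `|t - Cg g| / A < s.+1%:R.
  apply: (lt_le_trans (archi_boundP X0)); rewrite ler_nat.
  by apply: leq_trans (leq_addl M _) (leqnSn _).
rewrite ltr_pdivrMr ?A0 // => h.
have := ler_norm (t - Cg g); lra.
Qed.

Definition hh g s := y g s - D * (s%:R ^+ 2 - 1).

Lemma h_bounds g : g <= ghi -> exists hmin Cq C0, 0 <= Cq /\
  forall s, hmin <= hh g s <= Cq * s%:R ^+ 2 + C0.
Proof.
move=> gh.
set S := \sum_(i < M) `|hh g i|.
have S0 : 0 <= S by apply: sumr_ge0 => i _; exact: normr_ge0.
exists (- S - `|Cg g|), (A + B), (S + `|Cg g| + D); split.
  by apply: addr_ge0; [exact: ltW A0|exact: B0].
move=> s; case: (ltnP s M) => sM.
  have hS : `|hh g s| <= S.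
    rewrite /S (bigD1 (Ordinal sM)) //= lerDl.
    by apply: sumr_ge0 => i _; exact: normr_ge0.
  have := normr_ge0 (Cg g); have := ler_norm (hh g s); have := ler_norm (- hh g s).
  rewrite normrN.
  have : 0 <= (A + B) * s%:R ^+ 2.
    by apply: mulr_ge0; [apply: addr_ge0; [exact: ltW A0|exact: B0]|exact: sqr_ge0].
  have := D0; lra.
rewrite /hh (y_ge _ _ sM) /P.
have := AD; have := A0; have := B0; have := D0.
have s0 : 0 <= s%:R :> R by [].
have ss : s%:R <= s%:R ^+ 2 :> R.
  case: (s) => [|s']; first by rewrite expr2 mulr0.
  by rewrite expr2 ler_pMl // ?ltr0Sn // ler1n.
have := ler_norm (Cg g); have := ler_norm (- Cg g); rewrite normrN.
have := sqr_ge0 (s%:R : R).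
move=> q1 q2 q3 q4 q5 q6 q7.
have : 0 <= (A - D) * s%:R ^+ 2 by apply: mulr_ge0 => //; lra.
have : B * s%:R <= B * s%:R ^+ 2 by apply: ler_wpM2l.
have : 0 <= B * s%:R by apply: mulr_ge0.
nra.
Qed.

Lemma u_id s a : u s a = al * E a + D * (Q a + (1 - Q a) * (s%:R + 1) ^+ 2).
Proof. rewrite /ucost /al /D; ring. Qed.

Section Chain.
Variable yy : nat -> R.
Variable yy_mono : forall s, yy s <= yy s.+1.
Variable yy_unb : forall t, exists s, (1 <= s)%N /\ t <= yy s.+1.

Local Notation gam := (gamma p c r).

Definition Opt (b : act) t := forall a, v b t <= v a t.

Definition next (b : act) : act :=
  if [pick a | Q b < Q a] is Some a0 then Order.arg_min a0 (fun a => Q b < Q a) (gam b) else b.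

Lemma next_spec b a0 : Q b < Q a0 ->
  Q b < Q (next b) /\ forall a, Q b < Q a -> gam b (next b) <= gam b a.
Proof.
move=> ha0; rewrite /next; case: pickP => [a1 H1|H]; last by rewrite H in ha0.
by case: arg_minP => //= i Pi Hmin; split => // a Ha; exact: Hmin.
Qed.

Lemma opt_int b t0 t : Opt b t0 -> t0 <= t ->
  (forall a, Q b < Q a -> t <= al * gam b a) -> Opt b t.
Proof.
move=> Ho tt0 Hg a; have := Ho a; rewrite /v.
case: (ltgtP (Q a) (Q b)) => [lt|gt|eq].
- move=> h; nra.
- move: (Hg a gt); rewrite /gamma mulrA ler_pdivlMr ?subr_gt0 // => h1 h2; nra.
- by move/hinj: eq => ->; rewrite lexx.
Qed.

Lemma opt_next b t0 a0 : Opt b t0 -> Q b < Q a0 ->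
  t0 <= al * gam b (next b) /\ Opt (next b) (al * gam b (next b)).
Proof.
move=> Ho ha0; have [Hlt Hmin] := next_spec _ _ ha0.
have d0 : 0 < Q (next b) - Q b by rewrite subr_gt0.
have key : al * gam b (next b) * (Q (next b) - Q b) = al * (E (next b) - E b).
  by rewrite /gamma mulrA divfK // gt_eqF.
have al00 := al0.
split.
  have := Ho (next b); rewrite /v => h.
  rewrite -(ler_pM2r d0) key; nra.
have Ht : Opt b (al * gam b (next b)).
  apply: (opt_int _ _ _ Ho).
    have := Ho (next b); rewrite /v => h.
    rewrite -(ler_pM2r d0) key; nra.
  by move=> a Ha; rewrite ler_pM2l //; exact: Hmin.
move=> a; apply: le_trans (Ht a); rewrite /v.
rewrite le_eqVlt; apply/orP; left; apply/eqP.
have -> : al * E (next b) = al * E b + al * gam b (next b) * (Q (next b) - Q b) by rewrite key; ring.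
ring.
Qed.


Definition b1 : act := amin (yy 2%N).
Definition cs j := iter j next b1.
Definition topb (b : act) := [forall a, Q a <= Q b].

Lemma cs_S j : cs j.+1 = next (cs j). Proof. by []. Qed.

Lemma not_top b : ~~ topb b -> exists a0, Q b < Q a0.
Proof.
rewrite /topb negb_forall => /existsP [a0 H]; exists a0; by rewrite ltNge.
Qed.

Lemma top_no b : topb b -> forall a, ~ Q b < Q a.
Proof. by move=> /forallP H a; rewrite ltNge H. Qed.

Lemma ex_top : exists j, topb (cs j).
Proof.
case: (pselect (exists j, topb (cs j))) => // Hn; exfalso.
have inc : forall j, Q (cs j) < Q (cs j.+1).
  move=> j; have : ~~ topb (cs j) by apply/negP => H; apply: Hn; exists j.
  move=> /not_top [a0 Ha0]; rewrite cs_S; exact: (proj1 (next_spec _ _ Ha0)).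
have inc2 : forall i k, Q (cs i) < Q (cs (i + k.+1)).
  move=> i; elim=> [|k IH]; first by rewrite addn1; exact: inc.
  apply: lt_trans IH _; have := inc (i + k.+1); by rewrite -addnS.
set n := #|{: act}|.
have inj : injective (fun i : 'I_n.+1 => cs i).
  move=> i j /= eij; apply/val_inj/eqP; rewrite /= eqn_leq.
  apply/andP; split; rewrite leqNgt; apply/negP => lt.
  - have := inc2 j (i - j.+1)%N; rewrite addnS -addSn subnKC //.
    by rewrite eij ltxx.
  - have := inc2 i (j - i.+1)%N; rewrite addnS -addSn subnKC //.
    by rewrite eij ltxx.
have := leq_card _ inj; rewrite card_ord /n; by rewrite ltnn.
Qed.

Definition jstar := ex_minn ex_top.
Lemma jstar_top : topb (cs jstar).
Proof. by rewrite /jstar; case: ex_minnP. Qed.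
Lemma jstar_min j : (j < jstar)%N -> ~~ topb (cs j).
Proof.
rewrite /jstar; case: ex_minnP => n Pn Hmin jn; apply/negP => H.
by have := Hmin j H; rewrite leqNgt jn.
Qed.

Definition sig j := if j is j'.+1 then al * gam (cs j') (cs j) else yy 2%N.

Lemma opt_chain j : (j <= jstar)%N ->
  Opt (cs j) (sig j) /\ ((0 < j)%N -> sig j.-1 <= sig j).
Proof.
elim: j => [|j IH] hj.
  by split => // a; exact: m_le.
have [a0 Ha0] := not_top _ (jstar_min _ hj).
have [Ho _] := IH (ltnW hj).
have [h1 h2] := opt_next _ _ _ Ho Ha0.
by split; [exact: h2 | move=> _; exact: h1].
Qed.

Lemma sig_step j : (j < jstar)%N -> sig j <= sig j.+1.
Proof. by move=> hj; have [_ H] := opt_chain _ hj; exact: H. Qed.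

Lemma sig_mono i j : (i <= j)%N -> (j <= jstar)%N -> sig i <= sig j.
Proof.
move=> ij; elim: j ij => [|j IH] ij hj.
  by rewrite leqn0 in ij; move/eqP: ij => ->.
case: (leqP i j) => h.
  by apply: le_trans (IH h (ltnW hj)) (sig_step _ hj).
have -> : i = j.+1 by apply/eqP; rewrite eqn_leq ij h.
exact: lexx.
Qed.

Definition kk s := find (fun j => yy s.+1 < sig j.+1) (iota 0 jstar).
Definition phi s := cs (kk s).

Lemma yy_le i j : (i <= j)%N -> yy i <= yy j.
Proof.
move=> ij; apply: (@homo_leq R yy (fun a b => a <= b)) ij.
- exact: lexx.
- by move=> y0 x0 z0; apply: le_trans.
- exact: yy_mono.
Qed.

Lemma kk_le s : (kk s <= jstar)%N.
Proof. by rewrite /kk; apply: leq_trans (find_size _ _) _; rewrite size_iota. Qed.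

Lemma sig_kk s : (1 <= s)%N -> sig (kk s) <= yy s.+1.
Proof.
move=> s1; case H: (kk s) => [|j] /=.
  exact: yy_le.
have : (j < kk s)%N by rewrite H.
move=> /(before_find 0%N); rewrite nth_iota ?add0n; last first.
  by apply: leq_trans (kk_le s); rewrite H.
by move/negbT; rewrite -leNgt.
Qed.

Lemma phi_opt s : (1 <= s)%N -> Opt (phi s) (yy s.+1).
Proof.
move=> s1; rewrite /phi.
have [Ho _] := opt_chain _ (kk_le s).
apply: (opt_int _ _ _ Ho (sig_kk _ s1)) => a Ha.
case: (ltnP (kk s) jstar) => hk.
  have hf : yy s.+1 < sig (kk s).+1.
    have : has (fun j => yy s.+1 < sig j.+1) (iota 0 jstar) by rewrite has_find size_iota.
    move/(nth_find 0%N); rewrite -/(kk s) nth_iota ?add0n //.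
  apply: ltW; apply: lt_le_trans hf _.
  have [_ Hmin] := next_spec _ _ Ha.
  by rewrite /= ler_pM2l ?al0 //; exact: Hmin.
have ek : kk s = jstar by apply/eqP; rewrite eqn_leq hk kk_le.
by exfalso; move: Ha; rewrite ek => Ha; apply: (top_no _ jstar_top _ Ha).
Qed.

Lemma kk_eq s j : (j <= jstar)%N -> sig j <= yy s.+1 ->
  (j = jstar \/ yy s.+1 < sig j.+1) -> kk s = j.
Proof.
move=> hj hs hor; apply/eqP; rewrite eqn_leq; apply/andP; split.
  case: hor => [->|hl]; first exact: kk_le.
  rewrite leqNgt; apply/negP => lt.
  have := before_find 0%N lt; rewrite nth_iota ?add0n; last first.
    by apply: leq_trans lt (kk_le s).
  by rewrite hl.
rewrite leqNgt; apply/negP => lt.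
have hk : (kk s < jstar)%N by apply: leq_trans lt hj.
have : has (fun j => yy s.+1 < sig j.+1) (iota 0 jstar) by rewrite has_find size_iota.
move/(nth_find 0%N); rewrite -/(kk s) nth_iota ?add0n // => h.
have := sig_mono _ _ lt hj; lra.
Qed.

Lemma th_ex k : exists s, (0 < s)%N && (sig k <= yy s.+1).
Proof. by have [s [s1 h]] := yy_unb (sig k); exists s; rewrite s1 h. Qed.

Definition thf k := if k is 0 then 1%N else ex_minn (th_ex k).
Definition bf k := cs k.-1.
Definition Kf := jstar.+1.

Lemma thf_spec k : (0 < k)%N -> (0 < thf k)%N /\ sig k <= yy (thf k).+1 /\
  forall s, (0 < s)%N -> sig k <= yy s.+1 -> (thf k <= s)%N.
Proof.
case: k => [|k] // _; rewrite /thf; case: ex_minnP => n /andP[n0 hn] Hmin.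
by split => //; split => // s s0 hs; apply: Hmin; rewrite s0 hs.
Qed.

Lemma threshold_ok : threshold_with phi Kf bf thf.
Proof.
split => //.
- move=> k /andP[k1 kK]; rewrite /bf.
  case: k k1 kK => [|k] // _ kK /=.
  have [a0 Ha0] := not_top _ (jstar_min _ kK).
  have [hlt _] := next_spec _ _ Ha0.
  apply/negP => /eqP e; have e2 : cs k = next (cs k) := e; by rewrite -e2 ltxx in hlt.
- move=> k kK; case: k kK => [|k] kK.
    by have [h _] := thf_spec _ (ltn0Sn 0); rewrite /=.
  have [_ [h1 _]] := thf_spec _ (ltn0Sn k).
  have [h2 [h3 _]] := thf_spec _ (ltn0Sn k.+1).
  have [_ [_ Hmin]] := thf_spec _ (ltn0Sn k).
  apply: Hmin => //; apply: le_trans h3; apply: sig_step.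
  by rewrite /Kf ltnS in kK.
- move=> k s /andP[k1 kK] s1 th hor; rewrite /phi /bf; congr cs.
  have hj : (k.-1 <= jstar)%N by rewrite -ltnS prednK.
  apply: kk_eq => //.
    case: (k.-1) th => [|j] th /=; first exact: yy_le.
    have [_ [h1 _]] := thf_spec _ (ltn0Sn j).
    apply: le_trans h1 _; apply: yy_le; by [].
  case: hor => [-> | hs]; [by left|right].
  rewrite prednK //.
  have [_ [_ Hmin]] := thf_spec _ k1.
  rewrite ltNge; apply/negP => h; have := Hmin s s1 h; by rewrite leqNgt hs.
Qed.

Lemma chain_ok k : (1 <= k < Kf)%N -> Q (bf k) < Q (bf k.+1) /\
  forall a, Q (bf k) < Q a -> gam (bf k) (bf k.+1) <= gam (bf k) a.
Proof.
case: k => [|k] // /andP[_ kK]; rewrite /bf /=.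
have [a0 Ha0] := not_top _ (jstar_min _ kK).
exact: next_spec _ _ Ha0.
Qed.

End Chain.

Lemma rhs_id g s a : y g 1 = 0 ->
  u s a + Q a * hh g 1 + (1 - Q a) * hh g s.+1 = v a (y g s.+1) + D.
Proof. move=> y10; rewrite /hh y10 u_id /v -natr1; ring. Qed.

Lemma lhs_id g s : g <= ghi -> g + hh g s = m (y g s.+1) + D.
Proof. move=> gh; rewrite /hh (y_rec _ gh s); ring. Qed.

Lemma main_result : exists (phi : nat -> act) (K : nat) (b : nat -> act) (th : nat -> nat),
    [/\ threshold_with phi K b th,
        optimal p c r beta eps phi &
        forall k, (1 <= k < K)%N ->
          Q (b k) < Q (b k.+1) /\
          forall a : act, Q (b k) < Q a ->
            gamma p c r (b k) (b k.+1) <= gamma p c r (b k) a].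
Proof.
have [g /andP[g0 gh] Gg] := exists_root.
have y10 : y g 1 = 0 by rewrite y1.
have ymono := y_mono _ gh; have yunb := y_unb _ gh.
have [hmin [Cq [C0 [Cq0 hb]]]] := h_bounds _ gh.
exists (phi (y g)), (Kf (y g)), (bf (y g)), (thf _ yunb); split.
- exact: threshold_ok.
- move=> pi Hpi.
  have bell_eq : forall s, (0 < s)%N -> g + hh g s = u s (phi (y g) s) +
      Q (phi (y g) s) * hh g 1 + (1 - Q (phi (y g) s)) * hh g s.+1.
    move=> s s1; rewrite lhs_id // rhs_id //; congr (_ + _).
    apply/eqP; rewrite eq_le m_le /=.
    have := phi_opt _ ymono s s1 (amin (y g s.+1)); by rewrite /m.
  have bell_le : forall s a, g + hh g s <= u s a + Q a * hh g 1 + (1 - Q a) * hh g s.+1.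
    by move=> s a; rewrite lhs_id // rhs_id // lerD2r m_le.
  have hh1 : hh g 1 = 0 by rewrite /hh y10; ring.
  have D00 := D0.
  have K0 : 0 < Cq / D + 1 by rewrite ltr_wpDl // divr_ge0 // ltW.
  have hbound : forall s a, Q a * hh g 1 + (1 - Q a) * hh g s.+1 <=
      (Cq / D + 1) * u s a + `|C0|.
    move=> s a; rewrite hh1 mulr0 add0r.
    have /andP[q0 q1] := Q01 a.
    have q2 : 0 <= 1 - Q a by lra.
    have h1 : (1 - Q a) * hh g s.+1 <= (1 - Q a) * (Cq * s.+1%:R ^+ 2 + C0).
      by apply: ler_wpM2l => //; case/andP: (hb s.+1).
    have h2a : (1 - Q a) * C0 <= (1 - Q a) * `|C0|.
      by apply: ler_wpM2l => //; exact: ler_norm.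
    have h2b : (1 - Q a) * `|C0| <= `|C0|.
      rewrite -[X in _ <= X]mul1r; apply: ler_wpM2r; [exact: normr_ge0|lra].
    have h2 := le_trans h2a h2b.
    have hu : D * ((1 - Q a) * s.+1%:R ^+ 2) <= u s a.
      rewrite u_id -natr1.
      have : 0 <= al * E a by apply: mulr_ge0; [exact: ltW al0|exact: E0].
      have : 0 <= D * Q a by apply: mulr_ge0 => //; exact: ltW.
      move=> e1 e2; nra.
    have hu0 : 0 <= u s a.
      apply: le_trans hu; apply: mulr_ge0; [exact: ltW|apply: mulr_ge0 => //; exact: sqr_ge0].
    have h3 : Cq * ((1 - Q a) * s.+1%:R ^+ 2) <= Cq / D * u s a.
      rewrite -mulrA; apply: ler_wpM2l => //.
      have -> : (1 - Q a) * s.+1%:R ^+ 2 = D^-1 * (D * ((1 - Q a) * s.+1%:R ^+ 2)).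
        by field; rewrite gt_eqF.
      by apply: ler_wpM2l; [rewrite invr_ge0 ltW | exact: hu].
    move: h1; rewrite mulrDr => h1.
    have -> : (Cq / D + 1) * u s a = Cq / D * u s a + u s a by ring.
    have : (1 - Q a) * (Cq * s.+1%:R ^+ 2) = Cq * ((1 - Q a) * s.+1%:R ^+ 2) by ring.
    lra.
  apply: le_trans (@Vavg_upper R N p c r beta eps Q01 g (hh g) (phi (y g)) hmin bell_eq
     (fun s => proj1 (andP (hb s))))
    (@Vavg_lower R N p c r beta eps Q01 g (hh g) pi (Cq / D + 1) `|C0| Hpi K0 bell_le hbound).
- by move=> k hk; exact: chain_ok.
Qed.
End Constr.

Theorem proposition2 (R : realType) (N : nat) (p c r : 'I_N -> R) (beta eps : R) :
  (0 < N)%N ->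
  (forall n, 0 < p n <= 1) ->
  (forall n, 0 <= c n) ->
  (forall n, 0 < r n <= 1) ->
  0 < beta < 1 ->
  0 < eps ->
  injective (Qa p r) ->
  exists (phi : nat -> {set 'I_N}) (K : nat) (b : nat -> {set 'I_N}) (th : nat -> nat),
    [/\ threshold_with phi K b th,
        optimal p c r beta eps phi &
        forall k, (1 <= k < K)%N ->
          Qa p r (b k) < Qa p r (b k.+1) /\
          forall a : {set 'I_N}, Qa p r (b k) < Qa p r a ->
            gamma p c r (b k) (b k.+1) <= gamma p c r (b k) a].
Proof.
move=> hN hp hc hr hb he hinj.
exact: (@main_result R N p c r beta eps hN hp hc hr hb he hinj).
Qed.
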